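(* Let $(X,\mathtt{d})$ be an instance of metric $k$-center clustering with $z$ outliers, $|X|=n$, $\gamma=z/n$, and let $\epsilon>0$ and $\eta\in(0,1/2)$. Run Algorithm 1 (described in the context) with $t=\frac{ck}{1-\eta}$ where $c=2+\frac{2}{k(1-\eta)}\ln\frac{1}{\eta}$, and let $E$ be its output. Then with probability at least $1-2\eta$, $\phi_{\epsilon}(X,E)\leq 2r_{\mathtt{opt}}$.
   Context: Let $(X,\mathtt{d})$ be a finite metric space with $|X|=n$ and let $k,z$ be positive integers with $z<n$. The $k$-center clustering with $z$ outliers problem asks for $X'\subseteq X$ with $|X'|\geq n-z$ and centers $c_1,\dots,c_k\in X$ minimizing $\max_{p\in X'}\min_j\mathtt{d}(p,c_j)$; $r_{\mathtt{opt}}$ denotes the optimal value. For $p\in X$ and $E\subseteq X$, $\mathtt{d}(p,E)=\min_{q\in E}\mathtt{d}(p,q)$. For $\epsilon\geq 0$ and a set $A\subseteq X$ (of any size), $\phi_\epsilon(X,A)=\min\{\max_{p\in X'}\mathtt{d}(p,A)\;:\;X'\subseteq X,\ |X'|\geq n-(1+\epsilon)z\}$. Algorithm 1 (input $(X,\mathtt{d})$, $k,z$, parameters $\epsilon>0$, $\eta\in(0,1/2)$, $t\in\mathbb{Z}^+$): Let $\gamma=z/n$ and $E=\emptyset$. Set $j=1$ and add to $E$ a set of $\frac{1}{1-\gamma}\log\frac{1}{\eta}$ vertices selected uniformly at random from $X$. Then, while $j<t$: set $j=j+1$; let $Q_j$ be the set of the $(1+\epsilon)z$ vertices of $X$ farthest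 from $E$ (w.r.t. $\mathtt{d}(\cdot,E)$); add to $E$ a set of $\frac{1+\epsilon}{\epsilon}\log\frac{1}{\eta}$ vertices selected uniformly at random from $Q_j$. Output $E$. *)

(* Defs.v *)
From HB Require Import structures.
From mathcomp Require Import all_boot all_order all_algebra.
From mathcomp Require Import reals exp.
Set Implicit Arguments. Unset Strict Implicit. Unset Printing Implicit Defensive.
Import Order.TTheory GRing.Theory Num.Theory.
Local Open Scope ring_scope.

Section KCenter.
Variables (R : realType) (X : finType) (d : X -> X -> R).

Definition is_metric : Prop :=
  [/\ forall x y, 0 <= d x y,
      forall x y, d x y = 0 <-> x = y,
      forall x y, d x y = d y x &
      forall x y w, d x w <= d x y + d y w].

(* the diameter; used as the neutral element of finite minima
   (every quantity minimized below is bounded by it) *)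
Definition diam : R := \big[Num.max/0]_(p : X) \big[Num.max/0]_(q : X) d p q.

(* d(p, E) = min_{q in E} d(p, q)  (equals diam when E is empty) *)
Definition distS (p : X) (E : {set X}) : R := \big[Num.min/diam]_(q in E) d p q.

Definition radius (Xp A : {set X}) : R := \big[Num.max/0]_(p in Xp) distS p A.

Definition r_opt (k z : nat) : R :=
  \big[Num.min/diam]_(c : k.-tuple X)
     \big[Num.min/diam]_(Xp : {set X} | (#|X| - z <= #|Xp|)%N)
        radius Xp [set x in c].

Definition phi (eps : R) (z : nat) (A : {set X}) : R :=
  \big[Num.min/diam]_(Xp : {set X} | #|X|%:R - (1 + eps) * z%:R <= #|Xp|%:R)
     radius Xp A.

Definition ceiln (x : R) : nat := `|Num.ceil x|%N.

(* Q-selection rule: sel E is a set of the ceil((1+eps)z) vertices farthest from E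
   (all of X if n is smaller); ties are broken arbitrarily. *)
Definition farthest_rule (eps : R) (z : nat) (sel : {set X} -> {set X}) : Prop :=
  forall E : {set X},
    #|sel E| = minn #|X| (ceiln ((1 + eps) * z%:R)) /\
    (forall p q, q \in sel E -> p \notin sel E -> distS p E <= distS q E).

(* Probability that the algorithm, currently holding E with j loop iterations
   still to run, ends with an output satisfying P.  Each iteration draws m2
   independent uniform samples (with replacement) from Q = sel E. *)
Fixpoint succ_from (P : {set X} -> bool) (sel : {set X} -> {set X})
    (m2 : nat) (j : nat) (E : {set X}) : R :=
  match j with
  | 0 => (P E)%:R
  | j'.+1 =>
      (#|sel E| ^ m2)%:R^-1 *
      \sum_(s : m2.-tuple X | all (mem (sel E)) s)
         succ_from P sel m2 j' (E :|: [set x in s])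
  end.

Definition alg1_prob (P : {set X} -> bool) (sel : {set X} -> {set X})
    (k z : nat) (eps eta : R) : R :=
  let n := #|X| in
  let gamma := z%:R / n%:R in
  let m1 := ceiln ((1 - gamma)^-1 * ln (eta^-1)) in
  let m2 := ceiln ((1 + eps) / eps * ln (eta^-1)) in
  let c := 2 + 2 / (k%:R * (1 - eta)) * ln (eta^-1) in
  let t := ceiln (c * k%:R / (1 - eta)) in
  (n ^ m1)%:R^-1 *
  \sum_(s : m1.-tuple X) succ_from P sel m2 t.-1 [set x in s].

End KCenter.

(* Main.v *)
Require Import Defs.
From HB Require Import structures.
From mathcomp Require Import all_boot all_order all_algebra.
From mathcomp Require Import reals exp sequences.
From mathcomp Require Import ring lra zify.
Set Implicit Arguments. Unset Strict Implicit. Unset Printing Implicit Defensive.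
Import Order.TTheory GRing.Theory Num.Theory.
Local Open Scope ring_scope.
Section Gen.
Variable R : realType.

Lemma pow_le_eta (x eta : R) (m : nat) : 0 <= x -> 0 < eta ->
  ln (eta^-1) <= m%:R * (1 - x) -> x ^+ m <= eta.
Proof.
move=> x0 e0 H.
have h1 : x <= expR (x - 1) by have := expR_ge1Dx (x - 1); lra.
have h2 : x ^+ m <= expR (x - 1) ^+ m by apply: lerXn2r; rewrite ?nnegrE ?expR_ge0.
apply: (le_trans h2); rewrite -expRM_natl.
have -> : eta = expR (- ln (eta^-1)).
  by rewrite expRN lnK ?invrK // posrE invr_gt0.
rewrite ler_expR; lra.
Qed.

Lemma ceiln_ge (x : R) : 0 <= x -> x <= (ceiln x)%:R.
Proof.
move=> x0; rewrite /ceiln natr_absz ger0_norm ?ceil_ge0 ?ceil_ge //.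
by apply: lt_le_trans x0; rewrite ltrN10.
Qed.

Lemma ceiln_le (x : R) (N : nat) : 0 <= x -> x <= N%:R -> (ceiln x <= N)%N.
Proof.
move=> x0 xN; rewrite /ceiln -lez_nat gez0_abs; last first.
  by rewrite ceil_ge0; apply: lt_le_trans x0; rewrite ltrN10.
by rewrite ceil_le_int.
Qed.

End Gen.

Section Count.
Variable R : realType.
Variable X : finType.

Lemma card_all (A : {set X}) m :
  #|[set s : m.-tuple X | all (mem A) s]| = (#|A| ^ m)%N.
Proof.
pose f (s : m.-tuple X) : {ffun 'I_m -> X} := [ffun i => tnth s i].
have finj : injective f.
  move=> s1 s2 /ffunP H; apply: eq_from_tnth => i; have := H i; rewrite !ffunE.
  done.
rewrite -(card_imset _ finj).
have -> : f @: [set s : m.-tuple X | all (mem A) s] = [set g in ffun_on A].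
  apply/setP => g; rewrite inE; apply/imsetP/idP.
    move=> [s]; rewrite inE => /allP Hs ->; apply/ffun_onP => i.
    by rewrite ffunE; apply: Hs; exact: mem_tnth.
  move/ffun_onP => Hg; exists [tuple g i | i < m].
    by rewrite inE; apply/allP => x /mapP [i _ ->]; apply: Hg.
  by apply/ffunP => i; rewrite ffunE tnth_mktuple.
by rewrite cardsE card_ffun_on card_ord.
Qed.

Lemma sum_all (A : {set X}) m :
  \sum_(s : m.-tuple X | all (mem A) s) (1 : R) = (#|A| ^ m)%:R.
Proof.
rewrite sumr_const -card_all; congr (_ *+ _).
by apply: eq_card => s; rewrite inE.
Qed.

End Count.

Section Metric.
Variables (R : realType) (X : finType) (d : X -> X -> R).
Hypothesis Hm : is_metric d.

Lemma d_ge0 p q : 0 <= d p q. Proof. by case: Hm. Qed.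

Lemma diam_ge0 : 0 <= diam d.
Proof. exact: bigmax_ge_id. Qed.

Lemma d_le_diam p q : d p q <= diam d.
Proof.
by apply: (bigmax_sup p) => //; apply: (bigmax_sup q).
Qed.

Lemma distS_ge0 p (E : {set X}) : 0 <= distS d p E.
Proof. apply: le_bigmin; [exact: diam_ge0 | move=> q _; exact: d_ge0]. Qed.

Lemma distS_le p (E : {set X}) q : q \in E -> distS d p E <= d p q.
Proof. by move=> qE; apply: bigmin_le_cond. Qed.

Lemma distS_le_diam p (E : {set X}) : distS d p E <= diam d.
Proof. exact: bigmin_le_id. Qed.

Lemma distS_mono p (E E' : {set X}) : E \subset E' -> distS d p E' <= distS d p E.
Proof.
move=> sEE'; apply: le_bigmin; first exact: distS_le_diam.
by move=> q qE; apply: distS_le; exact: (subsetP sEE').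
Qed.

Lemma radius_le (Xp E : {set X}) x : 0 <= x -> (forall p, p \in Xp -> distS d p E <= x) ->
  radius d Xp E <= x.
Proof. by move=> x0 H; apply: bigmax_le. Qed.

Lemma radius_ge p (Xp E : {set X}) : p \in Xp -> distS d p E <= radius d Xp E.
Proof. by move=> pX; apply: (bigmax_sup p). Qed.

Lemma radius_mono (Xp E E' : {set X}) : E \subset E' -> radius d Xp E' <= radius d Xp E.
Proof.
move=> sE; apply: radius_le; first exact: bigmax_ge_id.
move=> p pX; apply: le_trans (distS_mono p sE) _; exact: radius_ge.
Qed.

Lemma phi_le eps z (Xp E : {set X}) : #|X|%:R - (1 + eps) * z%:R <= #|Xp|%:R ->
  phi d eps z E <= radius d Xp E.
Proof. by move=> H; apply: (bigmin_le_cond _ _ H). Qed.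

Lemma phi_mono eps z (E E' : {set X}) : E \subset E' -> phi d eps z E' <= phi d eps z E.
Proof.
move=> sE; apply: le_bigmin; first exact: bigmin_le_id.
move=> Xp HXp; apply: le_trans (phi_le _ HXp) _; exact: radius_mono.
Qed.


Lemma radius_le_diam (Xp E : {set X}) : radius d Xp E <= diam d.
Proof. apply: radius_le; first exact: diam_ge0. move=> p _; exact: distS_le_diam. Qed.

Lemma distS_attained p (C : {set X}) q0 : q0 \in C ->
  exists2 q, q \in C & distS d p C = d p q.
Proof.
move=> q0C; rewrite /distS; have [q qC ->] := @eq_bigmin _ _ _ (diam d) q0 (fun q => q \in C) (fun q => d p q) q0C
  (fun q _ => d_le_diam p q).
by exists q.
Qed.

Lemma ropt_witness k z : (0 < #|X|)%N ->
  exists c : k.-tuple X, exists2 O : {set X}, (#|X| - z <= #|O|)%N &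
     radius d O [set x in c] = r_opt d k z.
Proof.
move/card_gt0P => [x0 _].
rewrite /r_opt.
have [c _ ->] := @eq_bigmin _ _ _ (diam d) [tuple x0 | i < k] xpredT
  (fun c : k.-tuple X => \big[Num.min/diam d]_(Xp : {set X} | (#|X| - z <= #|Xp|)%N)
        radius d Xp [set x in c]) isT (fun c _ => bigmin_le_id _ _ _ _).
have HT : (#|X| - z <= #|[set: X]|)%N by rewrite cardsT leq_subr.
have [O HO ->] := @eq_bigmin _ _ _ (diam d) setT (fun Xp : {set X} => (#|X| - z <= #|Xp|)%N)
  (fun Xp => radius d Xp [set x in c]) HT (fun Xp _ => radius_le_diam _ _).
by exists c, O.
Qed.

End Metric.

Lemma fin_ineq (R : realType) (a eta G0 G1 g1 : R) : 0 <= a -> a <= eta -> G0 <= G1 ->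
  eta * G1 + (1 - eta) * G0 <= g1 -> 1 - g1 <= a * (1 - G1) + (1 - a) * (1 - G0).
Proof.
move=> a0 ae G01 hg.
have hp : 0 <= (eta - a) * (G1 - G0) by apply: mulr_ge0; lra.
lra.
Qed.

Lemma G_arith (R : realType) (K T k L w eta : R) : k = K + 1 ->
  0 <= (T + 1 - (2 * k + 2 * L * w) * w) * (1 - eta) ->
  (2 * k + 2 * L * w) * w * (1 - eta) = 2 * k + 2 * L * w -> L <= L * w ->
  0 < eta -> eta < 1 / 2 -> K + T * ((1 + eta) / 2 - 1) <= - L.
Proof.
move=> hk e1 e2 e3 h1 h2.
have e1' : (2 * k + 2 * L * w) * w * (1 - eta) <= (T + 1) * (1 - eta).
  by rewrite -subr_ge0 -mulrBl.
rewrite e2 in e1'.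
lra.
Qed.

Lemma natfact1 a b n z : (a + b = n -> n - z <= a -> b <= z)%N.
Proof. lia. Qed.

Lemma key_eq (R : realType) (N A G : R) : N != 0 ->
  N^-1 * ((N - A) * (1 - G)) = (1 - A / N) * (1 - G).
Proof. by move=> h; field. Qed.

Lemma fin2 (R : realType) (a G eta : R) : 0 <= a -> a <= eta -> G <= eta ->
  eta < 1 / 2 -> 1 - 2 * eta <= (1 - a) * (1 - G).
Proof.
move=> a0 ae Ge eh.
have : (1 - eta) * (1 - eta) <= (1 - a) * (1 - G) by apply: ler_pM; lra.
nra.
Qed.

Section Main.
Variables (R : realType) (X : finType) (d : X -> X -> R).
Hypothesis Hm : is_metric d.
Variables (k z : nat) (eps eta : R) (sel : {set X} -> {set X}).
Hypotheses (kpos : (0 < k)%N) (zpos : (0 < z)%N) (zn : (z < #|X|)%N)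
  (eps0 : 0 < eps) (eta0 : 0 < eta) (etah : eta < 1 / 2)
  (Hsel : farthest_rule d eps z sel).
Variables (C O : {set X}).
Hypotheses (HO : (#|X| - z <= #|O|)%N) (HC : (#|C| <= k)%N)
  (Hcov : forall p, p \in O -> exists2 q, q \in C & d p q <= r_opt d k z)
  (Hr0 : 0 <= r_opt d k z).
Variable m2 : nat.
Hypothesis Hm2 : ln (eta^-1) <= m2%:R * (1 - (1 + eps)^-1).

Local Notation r := (r_opt d k z).
Definition Cl q := [set p in O | d p q <= r].
Definition bad (E : {set X}) :=
  [set q in C | [exists p in Cl q, 2 * r < distS d p E]].
Definition u E := #|bad E|.
Definition PP (E : {set X}) : bool := phi d eps z E <= 2 * r.
Definition rho := (1 + eta) / 2.
Definition g (j u : nat) : R := if u == 0%N then 0 else 2 ^+ u * rho ^+ j.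
Local Notation succ := (succ_from R PP sel m2).

Lemma covered (E : {set X}) e q p : e \in E -> e \in Cl q -> p \in Cl q ->
  distS d p E <= 2 * r.
Proof.
case: Hm => _ _ dsym dtri.
move=> eE; rewrite !inE => /andP[_ eq] /andP[_ pq].
apply: le_trans (distS_le d p eE) _.
apply: le_trans (dtri p q e) _; rewrite (dsym q e); lra.
Qed.

Lemma bad_mono (E E' : {set X}) : E \subset E' -> bad E' \subset bad E.
Proof.
move=> sE; apply/subsetP => q; rewrite !inE => /andP[-> /existsP[p /andP[pC H]]].
apply/existsP; exists p; rewrite pC /=.
exact: lt_le_trans H (distS_mono d p sE).
Qed.

Lemma bad_hit (E : {set X}) x q : x \in E -> x \in Cl q -> q \notin bad E.
Proof.
move=> xE xC; rewrite inE negb_and; apply/orP; right.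
apply/existsP => -[p /andP[pC H]].
by have := covered xE xC pC; rewrite leNgt H.
Qed.

Lemma in_Cl p : p \in O -> exists2 q, q \in C & p \in Cl q.
Proof. by move=> pO; have [q qC H] := Hcov pO; exists q; rewrite // inE pO. Qed.

Lemma O_valid : #|X|%:R - (1 + eps) * z%:R <= #|O|%:R :> R.
Proof.
have h : (#|X| <= #|O| + z)%N by rewrite addnC -leq_subLR.
have : (#|X|%:R <= (#|O| + z)%N%:R :> R) by rewrite ler_nat.
rewrite natrD => h2.
have : 0 <= eps * z%:R by apply: mulr_ge0; [exact: ltW | exact: ler0n].
rewrite mulrDl mul1r; lra.
Qed.

Lemma u0_P (E : {set X}) : u E = 0%N -> PP E.
Proof.
move=> u0; rewrite /PP; apply: le_trans (phi_le d E O_valid) _.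
apply: radius_le; first by have := Hr0; lra.
move=> p pO; have [q qC pCl] := in_Cl pO.
rewrite leNgt; apply/negP => H.
have : q \in bad E by rewrite inE qC /=; apply/existsP; exists p; rewrite pCl.
by rewrite (cards0_eq u0) inE.
Qed.

Lemma sel_pos (E : {set X}) : (0 < #|sel E|)%N.
Proof.
rewrite (Hsel E).1 leq_min; apply/andP; split; first exact: leq_ltn_trans (leq0n z) zn.
have h := ceiln_ge (x := (1 + eps) * z%:R).
have hz : 0 < (1 + eps) * z%:R by apply: mulr_gt0; [have := eps0; lra | rewrite ltr0n].
have := h (ltW hz); rewrite lt0n; apply: contraTneq => ->; lra.
Qed.

Lemma succ_ge0 j E : 0 <= succ j E.
Proof.
elim: j E => [|j IH] E /=; first exact: ler0n.
apply: mulr_ge0; first by rewrite invr_ge0 ler0n.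
by apply: sumr_ge0 => s _; exact: IH.
Qed.

Lemma succ_one j E : PP E -> succ j E = 1.
Proof.
elim: j E => [|j IH] E PE /=; first by rewrite PE.
rewrite (eq_bigr (fun _ => 1)); last first.
  move=> s _; apply: IH; rewrite /PP.
  by apply: le_trans (phi_mono d eps z (subsetUl E [set x in s])) PE.
rewrite sum_all mulVf // pnatr_eq0 expn_eq0 negb_and; apply/orP; left.
by rewrite -lt0n sel_pos.
Qed.


Lemma rho_ge0 : 0 <= rho.
Proof. rewrite /rho; have := eta0; lra. Qed.

Lemma g_ge0 j v : 0 <= g j v.
Proof.
rewrite /g; case: eqP => _ //.
by apply: mulr_ge0; apply: exprn_ge0 => //; exact: rho_ge0.
Qed.

Lemma g_mono j a b : (a <= b)%N -> g j a <= g j b.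
Proof.
move=> ab; rewrite /g; case: eqP => [_|a0]; first by have := g_ge0 j b; rewrite /g.
case: eqP => [b0|_]; first by exfalso; apply: a0; move: ab; rewrite b0 leqn0 => /eqP.
rewrite ler_wpM2r ?exprn_ge0 ?rho_ge0 // ler_eXn2l //.
by rewrite ltr1n.
Qed.

Lemma g_rec j v : (0 < v)%N -> eta * g j v + (1 - eta) * g j v.-1 <= g j.+1 v.
Proof.
move=> v0.
have h : g j v.-1 <= 2 ^+ v.-1 * rho ^+ j.
  rewrite /g; case: eqP => _ //.
  by apply: mulr_ge0; apply: exprn_ge0 => //; exact: rho_ge0.
have ha : 0 <= 2 ^+ v.-1 * rho ^+ j.
  by apply: mulr_ge0; apply: exprn_ge0 => //; exact: rho_ge0.
have nz : (v == 0%N) = false by apply/negbTE; rewrite -lt0n.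
set a := 2 ^+ v.-1 * rho ^+ j in h ha *.
have gv : g j v = 2 * a.
  by rewrite /g nz -{1}(prednK v0) exprS /a mulrA.
have gv1 : g j.+1 v = (1 + eta) * a.
  by rewrite /g nz -{1}(prednK v0) !exprS /a /rho; field.
rewrite gv gv1.
have := eta0; have := etah => e1 e2.
have : (1 - eta) * g j v.-1 <= (1 - eta) * a by apply: ler_wpM2l => //; lra.
lra.
Qed.

Lemma sum_const (P : pred (m2.-tuple X)) (c : R) :
  \sum_(s | P s) c = c * \sum_(s | P s) 1.
Proof. by rewrite mulr_sumr; apply: eq_bigr => s _; rewrite mulr1. Qed.

Lemma all_sub (A B : {set X}) m (s : m.-tuple X) : A \subset B ->
  all (mem B) s && all (mem A) s = all (mem A) s.
Proof.
move=> AB; case: (boolP (all (mem A) s)) => h; rewrite ?andbT ?andbF //.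
apply/allP => x xs; exact: (subsetP AB) (allP h x xs).
Qed.

Lemma main_step j (E : {set X}) :
  (forall E', 1 - g j (u E') <= succ j E') ->
  1 - g j.+1 (u E) <= succ j.+1 E.
Proof.
move=> IH.
case PE: (PP E).
  by rewrite succ_one //; have := g_ge0 j.+1 (u E); lra.
have u0 : (0 < u E)%N.
  by rewrite lt0n; apply/negP => /eqP h; move: PE; rewrite u0_P.
set S := sel E.
set B := [set p | 2 * r < distS d p E].
have hr := Hr0; have he := eps0; have hea := eta0; have heh := etah.
have hB1 : (1 + eps) * z%:R < #|B|%:R.
  rewrite ltNge; apply/negP => hle; suff : PP E by rewrite PE.
  have hval : #|X|%:R - (1 + eps) * z%:R <= #|~: B|%:R.
    have := cardsC B; move/(congr1 (fun n : nat => n%:R : R)); rewrite natrD => hc.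
    lra.
  apply: le_trans (phi_le d E hval) _.
  apply: radius_le; first lra.
  by move=> p; rewrite !inE -leNgt.
have hB2 : (ceiln ((1 + eps) * z%:R) <= #|B|)%N.
  apply: ceiln_le; last exact: ltW.
  by apply: mulr_ge0; [lra | exact: ler0n].
have hq : #|S| = minn #|X| (ceiln ((1 + eps) * z%:R)) := (Hsel E).1.
have hSB : S \subset B.
  apply/subsetP => s sS; apply/negPn/negP => sB.
  have BS : B \subset S.
    apply/subsetP => p pB; apply/negPn/negP => pS.
    have := (Hsel E).2 p s sS pS.
    move: pB sB; rewrite !inE -leNgt => pB sB; lra.
  have cardBS : #|B| = #|S|.
    apply/eqP; rewrite eqn_leq subset_leq_card // hq.
    exact: leq_trans (geq_minr _ _) hB2.
  move/(subset_cardP cardBS): BS => eqBS.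
  by move: sB; rewrite eqBS sS.
have hqz : (1 + eps) * z%:R <= #|S|%:R.
  rewrite hq; case: (leqP #|X| (ceiln ((1 + eps) * z%:R))) => h.
    apply: le_trans (ltW hB1) _; rewrite ler_nat.
    exact: max_card.
  apply: ceiln_ge.
  by apply: mulr_ge0; [lra | exact: ler0n].
set W := S :&: O.
have hSW : (#|S :\: W| <= z)%N.
  have sub : S :\: W \subset ~: O.
    apply/subsetP => x; rewrite !inE => /andP[h1 h2]; move: h1; rewrite h2 /=.
    by [].
  apply: leq_trans (subset_leq_card sub) _.
  exact: natfact1 (cardsC O) HO.
have hhit : forall s : m2.-tuple X, all (mem S) s -> ~~ all (mem (S :\: W)) s ->
    (u (E :|: [set x in s]) <= (u E).-1)%N.
  move=> s sS /allPn [x xs xnSW].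
  have xS : x \in S := allP sS x xs.
  have xO : x \in O by move: xnSW; rewrite !inE xS /= andbT negbK.
  have [q0 q0C xCl] := in_Cl xO.
  have q0b : q0 \in bad E.
    rewrite inE q0C /=; apply/existsP; exists x; rewrite xCl /=.
    by have := subsetP hSB x xS; rewrite inE.
  have q0n : q0 \notin bad (E :|: [set x in s]).
    by apply: (bad_hit (x := x)) => //; rewrite !inE xs orbT.
  have sub : bad (E :|: [set x in s]) \subset bad E :\ q0.
    apply/subsetP => y yb; rewrite in_setD1.
    rewrite (subsetP (bad_mono (subsetUl E [set x in s])) y yb) andbT.
    by apply/eqP => eyq; move: q0n; rewrite -eyq yb.
  apply: leq_trans (subset_leq_card sub) _.
  rewrite /u (cardsD1 q0 (bad E)) q0b add1n /=; exact: leqnn.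
have hnohit : forall s : m2.-tuple X, (u (E :|: [set x in s]) <= u E)%N.
  by move=> s; apply: subset_leq_card; apply: bad_mono; exact: subsetUl.
rewrite /= -/S (bigID (fun s : m2.-tuple X => all (mem (S :\: W)) s)) /=.
set N := (#|S| ^ m2)%:R : R.
set A := (#|S :\: W| ^ m2)%:R : R.
have SWS : S :\: W \subset S by apply: subsetDl.
have hcnt : \sum_(s : m2.-tuple X | all (mem S) s && ~~ all (mem (S :\: W)) s) (1 : R) = N - A.
  have := sum_all R S m2; rewrite (bigID (fun s : m2.-tuple X => all (mem (S :\: W)) s)) /=.
  rewrite (eq_bigl (fun s : m2.-tuple X => all (mem (S :\: W)) s)); last by move=> s; exact: (@all_sub _ _ m2 s SWS).
  rewrite sum_all -/N -/A => h; by rewrite -h addrAC subrr add0r.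
set G1 := g j (u E).
set G0 := g j (u E).-1.
have sum1 : A * (1 - G1) <=
    \sum_(s : m2.-tuple X | all (mem S) s && all (mem (S :\: W)) s) succ j (E :|: [set x in s]).
  rewrite (eq_bigl (fun s : m2.-tuple X => all (mem (S :\: W)) s)); last by move=> s; exact: (@all_sub _ _ m2 s SWS).
  have sA := sum_all R (S :\: W) m2; rewrite -/A in sA.
  rewrite -sA mulrC -sum_const; apply: ler_sum => s _.
  apply: le_trans (IH _); have := g_mono j (hnohit s); rewrite -/G1; lra.
have sum2 : (N - A) * (1 - G0) <=
    \sum_(s : m2.-tuple X | all (mem S) s && ~~ all (mem (S :\: W)) s) succ j (E :|: [set x in s]).
  rewrite -hcnt mulrC -sum_const; apply: ler_sum => s /andP[h1 h2].
  apply: le_trans (IH _); have := g_mono j (hhit s h1 h2); rewrite -/G0; lra.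
have Npos : 0 < N by rewrite ltr0n expn_gt0 sel_pos.
have G01 : G0 <= G1 by apply: g_mono; exact: leq_pred.
have rec := g_rec j u0; rewrite -/G1 -/G0 in rec.
set a := A / N.
have ha : a <= eta.
  rewrite /a /A /N !natrX -expr_div_n; apply: pow_le_eta => //.
    by apply: divr_ge0; exact: ler0n.
  apply: le_trans Hm2 _; apply: ler_wpM2l; first exact: ler0n.
  rewrite lerD2l lerN2.
  have qpos : 0 < #|S|%:R :> R by rewrite ltr0n sel_pos.
  rewrite ler_pdivrMr //.
  have hz : #|S :\: W|%:R <= z%:R :> R by rewrite ler_nat.
  have : z%:R <= (1 + eps)^-1 * #|S|%:R.
    have -> : (1 + eps)^-1 * #|S|%:R = (1 + eps)^-1 * (#|S|%:R - (1 + eps) * z%:R) + z%:R.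
      by field; lra.
    rewrite lerDr; apply: mulr_ge0; first by rewrite invr_ge0; lra.
    lra.
  lra.
have a0 : 0 <= a by apply: divr_ge0; exact: ler0n.
have key : N^-1 * (A * (1 - G1) + (N - A) * (1 - G0)) = a * (1 - G1) + (1 - a) * (1 - G0).
  by rewrite /a; field; lra.
have hmono : N^-1 * (A * (1 - G1) + (N - A) * (1 - G0)) <=
   N^-1 * (\sum_(s : m2.-tuple X | all (mem S) s && all (mem (S :\: W)) s) succ j (E :|: [set x in s]) +
           \sum_(s : m2.-tuple X | all (mem S) s && ~~ all (mem (S :\: W)) s) succ j (E :|: [set x in s])).
  by apply: ler_wpM2l; [rewrite invr_ge0; lra | exact: lerD].
apply: le_trans hmono; rewrite key.
exact: (fin_ineq a0 ha G01 rec).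
Qed.

Lemma main j E : 1 - g j (u E) <= succ j E.
Proof.
elim: j E => [|j IH] E; last exact: main_step.
rewrite /=; case u0: (u E == 0%N).
  by rewrite /g u0 (u0_P (eqP u0)) subr0.
rewrite /g u0 expr0 mulr1.
have h1 : 1 <= 2 ^+ u E :> R by apply: exprn_ege1; rewrite ler1n.
apply: le_trans (ler0n R (PP E)); by rewrite subr_le0.
Qed.

Lemma L_ge0 : 0 <= ln (eta^-1).
Proof. apply: ln_ge0; rewrite invf_ge1 //; have := etah; lra. Qed.

Lemma G_le (t : nat) :
  (2 + 2 / (k%:R * (1 - eta)) * ln (eta^-1)) * k%:R / (1 - eta) <= t%:R ->
  g t.-1 k.-1 <= eta.
Proof.
move=> ht.
have he := eta0; have heh := etah; have hL := L_ge0.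
rewrite /g; case: eqP => [_|k1]; first lra.
set L := ln (eta^-1) in ht hL *.
have h2 : 2 ^+ k.-1 <= expR ((k.-1)%:R * 1) :> R.
  rewrite expRM_natl; apply: lerXn2r; rewrite ?nnegrE ?expR_ge0 //.
  by have := expR_ge1Dx (1 : R); lra.
have hr : rho ^+ t.-1 <= expR ((t.-1)%:R * (rho - 1)).
  rewrite expRM_natl; apply: lerXn2r; rewrite ?nnegrE ?expR_ge0 ?rho_ge0 //.
  by have := expR_ge1Dx (rho - 1); lra.
have p1 : 0 <= 2 ^+ k.-1 :> R by apply: exprn_ge0.
have p2 : 0 <= rho ^+ t.-1 by apply: exprn_ge0; exact: rho_ge0.
apply: le_trans (ler_pM p1 p2 h2 hr) _.
rewrite -expRD.
have -> : eta = expR (- L) by rewrite expRN lnK ?invrK // posrE invr_gt0.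
rewrite ler_expR.
have hk : k%:R = (k.-1)%:R + 1 :> R by rewrite -{1}(prednK kpos) -addn1 natrD.
have htt : t%:R <= (t.-1)%:R + 1 :> R.
  have : (t <= t.-1 + 1)%N by rewrite addn1; exact: leqSpred.
  by rewrite -(ler_nat R) natrD.
set K := (k.-1)%:R in hk *; set T := (t.-1)%:R in htt *.
have k0 : k%:R != 0 :> R by rewrite pnatr_eq0 -lt0n.
set w := (1 - eta)^-1.
have hw : w * (1 - eta) = 1 by rewrite /w mulVf //; lra.
have hw1 : 1 <= w by rewrite /w invf_ge1; lra.
have ck : (2 + 2 / (k%:R * (1 - eta)) * L) * k%:R / (1 - eta) =
          (2 * k%:R + 2 * L * w) * w.
  by rewrite /w; field; apply/andP; split => //; lra.
rewrite ck in ht.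
have e1 : 0 <= (T + 1 - (2 * k%:R + 2 * L * w) * w) * (1 - eta).
  by apply: mulr_ge0; lra.
have e2 : (2 * k%:R + 2 * L * w) * w * (1 - eta) = 2 * k%:R + 2 * L * w.
  by rewrite -mulrA hw mulr1.
have e3 : L <= L * w by rewrite ler_peMr.
rewrite mulr1 /rho.
exact: (G_arith hk e1 e2 e3 he heh).
Qed.

Lemma final : m2 = ceiln ((1 + eps) / eps * ln (eta^-1)) ->
  1 - 2 * eta <= alg1_prob PP sel k z eps eta.
Proof.
move=> hm2def.
have he := eta0; have heh := etah; have hL := L_ge0; have hep := eps0.
have h1e : 0 < 1 - eta by lra.
rewrite /alg1_prob /= -hm2def.
set n := #|X|.
set gam := z%:R / n%:R.
set m1 := ceiln _.
set t := ceiln _.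
have npos : (0 < n)%N by exact: leq_ltn_trans (leq0n z) zn.
set N1 := (n ^ m1)%:R : R.
set A1 := (#|~: O| ^ m1)%:R : R.
set G := g t.-1 k.-1.
have hG : G <= eta.
  apply: G_le; rewrite /t; apply: ceiln_ge.
  apply: divr_ge0; last exact: ltW.
  apply: mulr_ge0; last exact: ler0n.
  apply: addr_ge0 => //; apply: mulr_ge0 => //; apply: divr_ge0 => //.
  by apply: mulr_ge0; [exact: ler0n | exact: ltW].
have N1pos : 0 < N1 by rewrite ltr0n expn_gt0 npos.
set a := A1 / N1.
have a0 : 0 <= a by apply: divr_ge0; exact: ler0n.
have ha : a <= eta.
  rewrite /a /A1 /N1 !natrX -expr_div_n; apply: pow_le_eta => //.
    by apply: divr_ge0; exact: ler0n.
  have hnp : 0 < n%:R :> R by rewrite ltr0n.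
  have hOz : #|~: O|%:R <= z%:R :> R.
    by rewrite ler_nat; exact: natfact1 (cardsC O) HO.
  have hzn : z%:R < n%:R :> R by rewrite ltr_nat.
  have g1 : gam < 1 by rewrite /gam ltr_pdivrMr // mul1r.
  have g0 : 0 <= gam by apply: divr_ge0; exact: ler0n.
  have hx : #|~: O|%:R / n%:R <= gam by rewrite /gam ler_pM2r // invr_gt0.
  have ng : 1 - gam != 0 by rewrite lt0r_neq0 // subr_gt0.
  have hm1 : (1 - gam)^-1 * ln (eta^-1) <= m1%:R.
    apply: ceiln_ge; apply: mulr_ge0 => //; rewrite invr_ge0 subr_ge0; exact: ltW.
  have : ln (eta^-1) <= m1%:R * (1 - gam).
    have -> : ln (eta^-1) = (1 - gam)^-1 * ln (eta^-1) * (1 - gam).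
      by rewrite mulrAC mulVf ?mul1r.
    by apply: ler_wpM2r => //; rewrite subr_ge0; exact: ltW.
  move=> h; apply: le_trans h _; apply: ler_wpM2l; first exact: ler0n.
  by rewrite lerD2l lerN2.
have key : N1^-1 * ((N1 - A1) * (1 - G)) = (1 - a) * (1 - G).
  by rewrite /a; apply: key_eq; rewrite lt0r_neq0.
have fin := fin2 a0 ha hG heh.
rewrite (bigID (fun s : m1.-tuple X => all (mem (~: O)) s)) /=.
have hcnt : \sum_(s : m1.-tuple X | ~~ all (mem (~: O)) s) (1 : R) = N1 - A1.
  have hall : \sum_(s : m1.-tuple X) (1 : R) = N1.
    rewrite /N1 /n -cardsT -(sum_all R setT m1); apply: eq_bigl => s.
    by apply/esym/allP => x _; rewrite inE.
  move: hall; rewrite (bigID (fun s : m1.-tuple X => all (mem (~: O)) s)) /= sum_all -/A1.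
  by move=> h; rewrite -h addrAC subrr add0r.
have P1 : 0 <= \sum_(s : m1.-tuple X | all (mem (~: O)) s) succ t.-1 [set x in s].
  by apply: sumr_ge0 => s _; exact: succ_ge0.
have P2 : (N1 - A1) * (1 - G) <=
    \sum_(s : m1.-tuple X | ~~ all (mem (~: O)) s) succ t.-1 [set x in s].
  rewrite -hcnt mulr_suml; apply: ler_sum => s /allPn [x xs xnO].
  rewrite mul1r; apply: le_trans (main _ _).
  suff : (u [set x in s] <= k.-1)%N.
    by move/(g_mono t.-1); rewrite -/G => h; rewrite lerD2l lerN2.
  have xO : x \in O by move: xnO; rewrite !inE negbK.
  have [q0 q0C xCl] := in_Cl xO.
  have q0n : q0 \notin bad [set x in s].
    by apply: (bad_hit (x := x)) => //; rewrite inE.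
  have sub : bad [set x in s] \subset C :\ q0.
    apply/subsetP => y yb; rewrite in_setD1.
    have : y \in C by move: yb; rewrite inE => /andP[].
    move=> ->; rewrite andbT.
    by apply/eqP => eyq; move: q0n; rewrite -eyq yb.
  apply: leq_trans (subset_leq_card sub) _.
  by move: HC; rewrite (cardsD1 q0 C) q0C add1n => h; rewrite -ltnS (prednK kpos).
have hmono : N1^-1 * ((N1 - A1) * (1 - G)) <=
  N1^-1 * (\sum_(s : m1.-tuple X | all (mem (~: O)) s) succ t.-1 [set x in s] +
           \sum_(s : m1.-tuple X | ~~ all (mem (~: O)) s) succ t.-1 [set x in s]).
  apply: ler_wpM2l; first by rewrite invr_ge0; exact: ltW.
  by rewrite -[X in X <= _]add0r; exact: lerD.
apply: le_trans hmono; rewrite key.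
exact: fin.
Qed.
End Main.

Lemma m2_bound (R : realType) (eps L M : R) : 0 < eps ->
  (1 + eps) / eps * L <= M -> L <= M * (1 - (1 + eps)^-1).
Proof.
move=> e0 hM.
have ne : 1 + eps != 0 by rewrite lt0r_neq0 //; lra.
have ne2 : eps != 0 by rewrite lt0r_neq0.
have -> : 1 - (1 + eps)^-1 = eps / (1 + eps) by field.
have hpos : 0 <= eps / (1 + eps) by apply: divr_ge0; lra.
apply: le_trans (ler_wpM2r hpos hM).
have -> : (1 + eps) / eps * L * (eps / (1 + eps)) = L by field; apply/andP; split.
done.
Qed.

Unset Implicit Arguments.

Theorem theorem5 (R : realType) (X : finType) (d : X -> X -> R)
  (k z : nat) (eps eta : R) (sel : {set X} -> {set X}) :
  is_metric d ->
  (0 < k)%N -> (0 < z)%N -> (z < #|X|)%N ->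
  0 < eps -> 0 < eta -> eta < 1 / 2 ->
  farthest_rule d eps z sel ->
  1 - 2 * eta <=
    alg1_prob (fun E => phi d eps z E <= 2 * r_opt d k z) sel k z eps eta.
Proof.
move=> Hm kpos zpos zn eps0 eta0 etah Hsel.
have npos : (0 < #|X|)%N by exact: leq_ltn_trans (leq0n z) zn.
have [c [O HO hr]] := ropt_witness d k z npos.
set C := [set x in c].
have HC : (#|C| <= k)%N.
  by rewrite cardsE; apply: leq_trans (card_size c) _; rewrite size_tuple.
have Hcov : forall p, p \in O -> exists2 q, q \in C & d p q <= r_opt d k z.
  move=> p pO.
  have h1 : distS d p C <= r_opt d k z by rewrite -hr; exact: radius_ge.
  have q0C : tnth c (Ordinal kpos) \in C by rewrite inE mem_tnth.
  have [q qC hq] := distS_attained d p q0C.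
  by exists q => //; rewrite -hq.
have Hr0 : 0 <= r_opt d k z by rewrite -hr; exact: bigmax_ge_id.
have Hm2 : ln (eta^-1) <= (ceiln ((1 + eps) / eps * ln (eta^-1)))%:R * (1 - (1 + eps)^-1).
  apply: m2_bound => //; apply: ceiln_ge; apply: mulr_ge0; last exact: L_ge0.
  by apply: divr_ge0; [rewrite addr_ge0 // ltW | exact: ltW].
exact: (final Hm kpos zpos zn eps0 eta0 etah Hsel HO HC Hcov Hr0 Hm2 erefl).
Qed.
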